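(* Let $w_0\in\mathbb{N}$ and $w=(w_1,\dots,w_n)\in\mathbb{N}^n$ with each $w_i\le 2^{n^2}$, let $M=cn$ for a sufficiently large absolute constant $c>0$, let $\lambda=M\|w\|_2$, and define $p_W(x)=\left(\sum_{i=1}^n w_ix_i-w_0\right)^2+\lambda\sum_{i=1}^n x_i(1-x_i)$, $f_W(x)=\mathrm{sign}(\tfrac12-p_W(x))$, and $\beta_n=\frac{1}{2\|w\|_2}\left(\sqrt{M^2+2}-M\right)$. Let $x\in[0,1]^n$ be at $\ell_1$ distance at most $\beta_n$ from some $z\in\{0,1\}^n$. If $w\cdot z=w_0$, then $f_W(x)=1$.
   Context: $\mathrm{sign}(0)=1$; $\|w\|_2$ is the Euclidean norm. *)

(* Defs.v *)
From mathcomp Require Import all_boot all_order all_algebra.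
From mathcomp Require Import reals.
Set Implicit Arguments. Unset Strict Implicit. Unset Printing Implicit Defensive.
Import Order.TTheory GRing.Theory Num.Theory.
Local Open Scope ring_scope.

(* sign with the convention sign(0) = 1 *)
Definition sign {R : realType} (t : R) : R := if 0 <= t then 1 else -1.

Definition norm2 {R : realType} {n : nat} (w : 'I_n -> nat) : R :=
  Num.sqrt (\sum_(i < n) ((w i)%:R : R) ^+ 2).

Definition dist1 {R : realType} {n : nat} (x y : 'I_n -> R) : R :=
  \sum_(i < n) `|x i - y i|.

Definition pW {R : realType} {n : nat} (M : R) (w0 : nat) (w : 'I_n -> nat)
  (x : 'I_n -> R) : R :=
  (\sum_(i < n) (w i)%:R * x i - w0%:R) ^+ 2
  + (M * norm2 w) * \sum_(i < n) x i * (1 - x i).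

Definition fW {R : realType} {n : nat} (M : R) (w0 : nat) (w : 'I_n -> nat)
  (x : 'I_n -> R) : R := sign (2^-1 - pW M w0 w x).

Definition beta {R : realType} {n : nat} (M : R) (w : 'I_n -> nat) : R :=
  (2 * norm2 w)^-1 * (Num.sqrt (M ^+ 2 + 2) - M).

(* Main.v *)
Require Import Defs.
From mathcomp Require Import all_boot all_order all_algebra.
From mathcomp Require Import reals.
From mathcomp Require Import ring lra.
Import Order.TTheory GRing.Theory Num.Theory.
Local Open Scope ring_scope.

Theorem claim5p10 (R : realType) :
  exists c0 : R, 0 < c0 /\
  forall (c : R), c0 <= c ->
  forall (n : nat) (w0 : nat) (w : 'I_n -> nat),
    (forall i, (w i <= 2 ^ (n * n))%N) ->
  forall (x : 'I_n -> R) (z : 'I_n -> bool),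
    (forall i, 0 <= x i <= 1) ->
    dist1 x (fun i => (z i)%:R) <= beta (c * n%:R) w ->
    (\sum_(i < n) w i * z i)%N = w0 ->
    fW (c * n%:R) w0 w x = 1.
Proof.
exists 1; split; first by [].
move=> c hc n w0 w _ x z hx hD hw0.
set M := c * n%:R.
have hM : 0 <= M by apply: mulr_ge0; [lra | exact: ler0n].
set N : R := norm2 w.
have hN : 0 <= N by exact: sqrtr_ge0.
set D : R := dist1 x (fun i => (z i)%:R).
have hD0 : 0 <= D by apply: sumr_ge0 => i _; exact: normr_ge0.
set s := Num.sqrt (M ^+ 2 + 2).
have hs2 : s ^+ 2 = M ^+ 2 + 2 by rewrite sqr_sqrtr //; apply: addr_ge0; [exact: sqr_ge0|lra].
have hs0 : 0 <= s by exact: sqrtr_ge0.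
have hwN : forall i, (w i)%:R <= N.
  move=> i; rewrite /N /norm2.
  have -> : ((w i)%:R : R) = Num.sqrt (((w i)%:R : R) ^+ 2).
    by rewrite sqrtr_sqr ger0_norm // ler0n.
  apply: ler_wsqrtr.
  rewrite (bigD1 i) //= lerDl; apply: sumr_ge0 => j _; exact: sqr_ge0.
have htt : N * D <= (s - M) / 2.
  have [->|Nne] := eqVneq N 0.
    rewrite mul0r; apply: divr_ge0; last lra; nra.
  have Np : 0 < N by rewrite lt0r Nne hN.
  have := ler_wpM2l hN hD; rewrite /beta -/N -/s -/M => h.
  apply: (le_trans h); rewrite le_eqVlt; apply/orP; left; apply/eqP.
  field; exact: Nne.
set A := \sum_(i < n) (w i)%:R * x i - (w0%:R : R).
have hA : A = \sum_(i < n) (w i)%:R * (x i - (z i)%:R).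
  rewrite /A -hw0 natr_sum -sumrB; apply: eq_bigr => i _.
  by rewrite natrM mulrBr.
have hAb : `|A| <= N * D.
  rewrite hA /D /dist1 mulr_sumr; apply: (le_trans (ler_norm_sum _ _ _)).
  apply: ler_sum => i _; rewrite normrM ger0_norm ?ler0n //.
  apply: ler_wpM2r; [exact: normr_ge0 | exact: hwN].
set B := \sum_(i < n) x i * (1 - x i).
have hB : B <= D.
  apply: ler_sum => i _; have /andP[h0 h1] := hx i.
  case: (z i) => /=.
    rewrite ler0_norm; [nra|lra].
  rewrite subr0 ger0_norm //; nra.
have hp : pW M w0 w x <= 2^-1.
  rewrite /pW -/N -/A -/B.
  have hA2 : A ^+ 2 <= (N * D) ^+ 2.
    move: hAb; rewrite ler_norml => /andP[h1 h2]; nra.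
  have hMB : M * N * B <= M * (N * D).
    rewrite mulrA; apply: ler_wpM2l => //; exact: mulr_ge0.
  have hND : 0 <= N * D by exact: mulr_ge0.
  have : (N * D) ^+ 2 + M * (N * D) <= 2^-1.
    set t := N * D in htt hND *.
    have e : ((s - M) / 2) ^+ 2 + M * ((s - M) / 2) = (s ^+ 2 - M ^+ 2) / 4.
      by rewrite -[X in X / 4]/(s ^+ 2 - M ^+ 2); field.
    rewrite hs2 in e.
    have e2 : ((s - M) / 2) ^+ 2 + M * ((s - M) / 2) = 2^-1.
      by rewrite e; field.
    rewrite -e2; nra.
  lra.
rewrite /fW /sign; case: ifP => // /negbT; rewrite subr_ge0 hp //.
Qed.
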